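(* Let $q$, $\Delta$, $A_E\in\mathbb{R}_{\ge0}^{q\times q}$ and $A_V\in\mathbb{R}_{\ge0}^q$ be constants. Then there is a constant $b=b_{q,\Delta,A_E,A_V}>0$ such that for every graph $G$ of maximum degree $\Delta$, every permissive spin system $(G,q,A_E,A_V)$ is $b$-marginally bounded.
   Context: A spin system $(G,q,A_E,A_V)$ on $G=(V,E)$ assigns to $\sigma\in[q]^V$ the weight $w(\sigma)=\prod_{\{u,v\}\in E}A_E(\sigma(u),\sigma(v))\prod_{v\in V}A_V(\sigma(v))$, with Gibbs distribution $\mu\propto w$. For $\Lambda\subseteq V$ and any (possibly infeasible) $\sigma\in[q]^\Lambda$, let $w^\sigma(\tau)=\mathbf 1[\tau|_\Lambda=\sigma]\prod_{v\notin\Lambda}A_V(\tau(v))\prod_{\{u,v\}\in E,u\notin\Lambda,v\in\Lambda}A_E(\tau(u),\sigma(v))\prod_{\{u,v\}\in E,u,v\notin\Lambda}A_E(\tau(u),\tau(v))$ for $\tau\in[q]^V$, $Z^\sigma=\sum_\tau w^\sigma(\tau)$ and $\mu^\sigma=w^\sigma/Z^\sigma$. The system is permissive if $Z^\sigma>0$ for all $\Lambda\subseteq V$ and $\sigma\in[q]^\Lambda$. Let $\mu^\sigma_v$ be the marginal of $\mu^\sigma$ at $v$. The system is $b$-marginally bounded if for every $\Lambda\subseteq V$, $\sigma\in[q]^\Lambda$, $v\notin\Lambda$ and $c\in[q]$ with $\mu^\sigma_v(c)>0$, one has $\mu^\sigma_v(c)\ge b$. *)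

(* Defs.v *)
From mathcomp Require Import all_boot all_order all_algebra.
From mathcomp Require Import reals.
Set Implicit Arguments. Unset Strict Implicit. Unset Printing Implicit Defensive.
Import Order.TTheory GRing.Theory Num.Theory.
Local Open Scope ring_scope.

Section SpinSystem.
Variables (R : realType) (q : nat) (AE : 'I_q -> 'I_q -> R) (AV : 'I_q -> R).
Variables (V : finType) (e : rel V).

(* A boundary condition sigma in [q]^Lambda is represented by a total
   function V -> 'I_q of which only the values on Lambda are used. *)

Definition wcond (L : {set V}) (sigma tau : V -> 'I_q) : R :=
  (if [forall v in L, tau v == sigma v] then 1 else 0)
  * (\prod_(v : V | v \notin L) AV (tau v))
  * (\prod_(u : V | u \notin L) \prod_(v : V | (v \in L) && e u v)
        AE (tau u) (sigma v))
  * (\prod_(u : V | u \notin L) \prod_(v : V | [&& v \notin L, e u v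
        & (val (enum_rank u) < val (enum_rank v))%N]) AE (tau u) (tau v)).

Definition Zcond (L : {set V}) (sigma : V -> 'I_q) : R :=
  \sum_(tau : {ffun V -> 'I_q}) wcond L sigma tau.

Definition marginal (L : {set V}) (sigma : V -> 'I_q) (v : V) (c : 'I_q) : R :=
  (\sum_(tau : {ffun V -> 'I_q} | tau v == c) wcond L sigma tau)
  / Zcond L sigma.

Definition permissive : Prop :=
  forall (L : {set V}) (sigma : V -> 'I_q), 0 < Zcond L sigma.

Definition marginally_bounded (b : R) : Prop :=
  forall (L : {set V}) (sigma : V -> 'I_q) (v : V) (c : 'I_q),
    v \notin L -> 0 < marginal L sigma v c -> b <= marginal L sigma v c.

End SpinSystem.

Definition max_degree_le (V : finType) (e : rel V) (Delta : nat) : Prop :=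
  forall v : V, (#|[set u | e v u]| <= Delta)%N.

(* Main.v *)
Require Import Defs.
From mathcomp Require Import all_boot all_order all_algebra.
From mathcomp Require Import reals.
From mathcomp Require Import zify ring lra.
Import Order.TTheory GRing.Theory Num.Theory.
Local Open Scope ring_scope.

Set Implicit Arguments. Unset Strict Implicit.

Section Generic.
Variable R : realType.

Lemma mul_pos_split (a b : R) : 0 <= a -> 0 <= b -> 0 < a * b -> 0 < a /\ 0 < b.
Proof.
move=> a0 b0 ab; split; rewrite lt0r; [|rewrite b0 andbT]; rewrite ?a0 ?andbT;
  apply/eqP => H; by rewrite H ?mul0r ?mulr0 ltxx in ab.
Qed.

Lemma prod_pos_each (X : finType) (P : pred X) (h : X -> R) :
  (forall x, P x -> 0 <= h x) -> 0 < \prod_(x | P x) h x -> forall x, P x -> 0 < h x.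
Proof.
move=> h0 hp x Px; rewrite lt0r h0 // andbT; apply/eqP => hx.
by move: hp; rewrite (bigD1 x) //= hx mul0r ltxx.
Qed.

Variables (m M : R).
Hypotheses (m0 : 0 < m) (m1 : m <= 1) (M1 : 1 <= M).

Lemma inner_le (X : finType) (P : pred X) (h : X -> R) (D : nat) :
  (forall x, P x -> 0 <= h x <= M) -> (#|P| <= D)%N -> \prod_(x | P x) h x <= M ^+ D.
Proof.
move=> hb PD; apply: (le_trans (y := \prod_(x | P x) M)).
  apply: ler_prod => x Px; rewrite (hb x Px) /=; by case/andP: (hb x Px).
have -> : \prod_(x | P x) M = \prod_(x in P) M by [].
by rewrite prodr_const; apply: ler_weXn2l.
Qed.

Lemma inner_ge (X : finType) (P : pred X) (h : X -> R) (D : nat) :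
  (forall x, P x -> 0 <= h x /\ (0 < h x -> m <= h x)) -> (#|P| <= D)%N ->
  0 < \prod_(x | P x) h x -> m ^+ D <= \prod_(x | P x) h x.
Proof.
move=> hb PD hp.
have hpos := @prod_pos_each X P h (fun x Px => (hb x Px).1) hp.
apply: (le_trans (y := \prod_(x | P x) m)).
  have -> : \prod_(x | P x) m = \prod_(x in P) m by [].
  by rewrite prodr_const; apply: ler_wiXn2l => //; apply: ltW.
apply: ler_prod => x Px; rewrite (ltW m0) /=; exact: (hb x Px).2 (hpos x Px).
Qed.

Lemma prod_compare (X : finType) (P T : pred X) (f g : X -> R) (a b : R) (K : nat) :
  0 < a -> a <= 1 -> 1 <= b ->
  (forall x, P x -> 0 <= f x) -> (forall x, P x -> 0 <= g x) ->
  (forall x, P x -> ~~ T x -> f x = g x) ->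
  (forall x, P x -> T x -> f x <= b) ->
  (forall x, P x -> T x -> 0 < g x -> a <= g x) ->
  (#|[pred x | P x && T x]| <= K)%N ->
  0 < \prod_(x | P x) g x ->
  a ^+ K * \prod_(x | P x) f x <= b ^+ K * \prod_(x | P x) g x.
Proof.
move=> a0 a1 b1 f0 g0 fg fb ga card gp.
have gpos := @prod_pos_each X P g g0 gp.
rewrite (bigID T) [X in _ <= _ * X](bigID T) /=.
have -> : \prod_(i | P i && ~~ T i) f i = \prod_(i | P i && ~~ T i) g i.
  by apply: eq_bigr => x /andP[Px Tx]; apply: fg.
set A := \prod_(i | P i && ~~ T i) g i.
have A0 : 0 <= A by apply: prodr_ge0 => x /andP[Px _]; apply: g0.
have F1 : \prod_(i | P i && T i) f i <= b ^+ K.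
  apply: (le_trans (y := \prod_(i | P i && T i) b)).
    apply: ler_prod => x /andP[Px Tx]; rewrite f0 //=; exact: fb.
  have -> : \prod_(i | P i && T i) b = \prod_(i in [pred x | P x && T x]) b by [].
  by rewrite prodr_const; apply: ler_weXn2l.
have G1 : a ^+ K <= \prod_(i | P i && T i) g i.
  apply: (le_trans (y := \prod_(i | P i && T i) a)).
    have -> : \prod_(i | P i && T i) a = \prod_(i in [pred x | P x && T x]) a by [].
    by rewrite prodr_const; apply: ler_wiXn2l => //; apply: ltW.
  apply: ler_prod => x /andP[Px Tx]; rewrite (ltW a0) /=; apply: ga => //; exact: gpos.
have F0 : 0 <= \prod_(i | P i && T i) f i by apply: prodr_ge0 => x /andP[Px _]; apply: f0.
have aK0 : 0 <= a ^+ K by apply: exprn_ge0; apply: ltW.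
have bK0 : 0 <= b ^+ K by apply: exprn_ge0; apply: le_trans b1.
rewrite mulrA [X in _ <= X]mulrA.
apply: ler_wpM2r => //.
rewrite mulrC; apply: ler_pM => //.
Qed.

End Generic.

Set Implicit Arguments. Unset Strict Implicit.


Section Local.
Variables (R : realType) (q : nat) (AE : 'I_q -> 'I_q -> R) (AV : 'I_q -> R).
Hypotheses (AE0 : forall i j, 0 <= AE i j) (AEs : forall i j, AE i j = AE j i)
  (AV0 : forall i, 0 <= AV i).
Variables (V : finType) (e : rel V).
Hypotheses (esym : symmetric e) (eirr : irreflexive e).

Definition P1 (L : {set V}) (tau : V -> 'I_q) := \prod_(v : V | v \notin L) AV (tau v).
Definition P2 (L : {set V}) (sigma tau : V -> 'I_q) :=
  \prod_(u : V | u \notin L) \prod_(v : V | (v \in L) && e u v) AE (tau u) (sigma v).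
Definition P3 (L : {set V}) (tau : V -> 'I_q) :=
  \prod_(u : V | u \notin L) \prod_(v : V | [&& v \notin L, e u v
        & (val (enum_rank u) < val (enum_rank v))%N]) AE (tau u) (tau v).

Lemma wcond_split (L : {set V}) (sigma tau : V -> 'I_q) : [forall v in L, tau v == sigma v] ->
  wcond AE AV e L sigma tau = P1 L tau * P2 L sigma tau * P3 L tau.
Proof. by move=> H; rewrite /wcond H mul1r. Qed.

Lemma P1_ge0 (L : {set V}) (tau : V -> 'I_q) : 0 <= P1 L tau.
Proof. by apply: prodr_ge0. Qed.
Lemma P2_ge0 (L : {set V}) (sigma tau : V -> 'I_q) : 0 <= P2 L sigma tau.
Proof. by apply: prodr_ge0 => u _; apply: prodr_ge0. Qed.
Lemma P3_ge0 (L : {set V}) (tau : V -> 'I_q) : 0 <= P3 L tau.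
Proof. by apply: prodr_ge0 => u _; apply: prodr_ge0. Qed.

Lemma wcond_ge0 (L : {set V}) (sigma tau : V -> 'I_q) : 0 <= wcond AE AV e L sigma tau.
Proof.
rewrite /wcond; apply: mulr_ge0; [apply: mulr_ge0; [apply: mulr_ge0|]|].
- by case: ifP.
- exact: P1_ge0.
- exact: P2_ge0.
- exact: P3_ge0.
Qed.

Lemma pos_iff (L : {set V}) (sigma tau : V -> 'I_q) :
  0 < wcond AE AV e L sigma tau <->
  [/\ forall u, u \in L -> tau u = sigma u,
      forall u, u \notin L -> 0 < AV (tau u) &
      forall u x, u \notin L -> e u x -> 0 < AE (tau u) (tau x)].
Proof.
split.
- rewrite /wcond; case: ifP => Hind; last by rewrite !mul0r ltxx.
  rewrite mul1r -/(P1 L tau) -/(P2 L sigma tau) -/(P3 L tau) => H.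
  have [H' H3] := @mul_pos_split R _ _ (mulr_ge0 (P1_ge0 L tau) (P2_ge0 L sigma tau)) (P3_ge0 L tau) H.
  have [H1 H2] := @mul_pos_split R _ _ (P1_ge0 L tau) (P2_ge0 L sigma tau) H'.
  have HL : forall u, u \in L -> tau u = sigma u.
    by move/forall_inP: Hind => Hind u uL; apply/eqP; apply: Hind.
  split => //.
    by apply: (@prod_pos_each R V _ _ _ H1).
  have H2o := @prod_pos_each R V _ _ (fun u _ => prodr_ge0 _ (fun v _ => AE0 _ _)) H2.
  have H3o := @prod_pos_each R V _ _ (fun u _ => prodr_ge0 _ (fun v _ => AE0 _ _)) H3.
  have key : forall u x, u \notin L -> x \notin L -> e u x ->
      (val (enum_rank u) < val (enum_rank x))%N -> 0 < AE (tau u) (tau x).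
    move=> u x uL xL eux lt.
    have := @prod_pos_each R V _ _ (fun v _ => AE0 _ _) (H3o u uL) x.
    by apply; rewrite xL eux lt.
  move=> u x uL eux.
  case xL: (x \in L).
    rewrite (HL x xL).
    have := @prod_pos_each R V _ _ (fun v _ => AE0 _ _) (H2o u uL) x.
    by apply; rewrite xL eux.
  have xL' : x \notin L by rewrite xL.
  case: (ltngtP (val (enum_rank u)) (val (enum_rank x))) => cmp.
  + exact: key.
  + by rewrite AEs; apply: key => //; rewrite esym.
  + have ux : u = x by apply: enum_rank_inj; apply: val_inj.
    by rewrite ux eirr in eux.
- case=> HL HV HE.
  have Hind : [forall v in L, tau v == sigma v].
    by apply/forall_inP => u uL; apply/eqP; apply: HL.
  rewrite wcond_split //; apply: mulr_gt0; [apply: mulr_gt0|].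
  + by apply: prodr_gt0.
  + apply: prodr_gt0 => u uL; apply: prodr_gt0 => x /andP[xL eux].
    by rewrite -HL //; apply: HE.
  + apply: prodr_gt0 => u uL; apply: prodr_gt0 => x /and3P[xL eux _].
    by apply: HE.
Qed.
End Local.

Unset Implicit Arguments.



Lemma card_bigcup_le (X Y : finType) (A : {set X}) (F : X -> {set Y}) :
  (#|\bigcup_(x in A) F x| <= \sum_(x in A) #|F x|)%N.
Proof.
elim/big_rec2: _ => [|x B n _ IH]; first by rewrite cards0.
rewrite cardsU; apply: leq_trans (leq_subr _ _) _; by rewrite leq_add2l.
Qed.

Section Local3.
Variables (R : realType) (q : nat) (AE : 'I_q -> 'I_q -> R) (AV : 'I_q -> R).
Hypotheses (AE0 : forall i j, 0 <= AE i j) (AEs : forall i j, AE i j = AE j i)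
  (AV0 : forall i, 0 <= AV i).
Variables (m M : R) (Delta : nat).
Hypotheses (m0 : 0 < m) (m1 : m <= 1) (M1 : 1 <= M)
  (HmE : forall i j, 0 < AE i j -> m <= AE i j) (HmV : forall i, 0 < AV i -> m <= AV i)
  (HME : forall i j, AE i j <= M) (HMV : forall i, AV i <= M).
Variables (V : finType) (e : rel V).
Hypotheses (esym : symmetric e) (eirr : irreflexive e) (edeg : max_degree_le e Delta).

Definition alpha := m ^+ Delta.+1 * (m ^+ Delta) ^+ Delta.+1 * (m ^+ Delta) ^+ (Delta.+1 * Delta.+1).
Definition beta := M ^+ Delta.+1 * (M ^+ Delta) ^+ Delta.+1 * (M ^+ Delta) ^+ (Delta.+1 * Delta.+1).

Lemma alpha_gt0 : 0 < alpha.
Proof. by rewrite /alpha !mulr_gt0 // !exprn_gt0. Qed.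

Lemma nbr_card (u : V) (P : pred V) : (forall x, P x -> e u x) -> (#|P| <= Delta)%N.
Proof.
move=> H; apply: leq_trans (edeg u); apply: subset_leq_card.
by apply/subsetP => x Px; rewrite inE; apply: H.
Qed.

Lemma mD1 : m ^+ Delta <= 1. Proof. by apply: exprn_ile1 => //; apply: ltW. Qed.
Lemma MD1 : 1 <= M ^+ Delta. Proof. by apply: exprn_ege1. Qed.
Lemma mD0 : 0 < m ^+ Delta. Proof. by apply: exprn_gt0. Qed.

Lemma compare (L S : {set V}) (sigma tau eta : V -> 'I_q) :
  (forall u, u \in S -> u \notin L) -> (#|S| <= Delta.+1)%N ->
  (forall u, u \notin S -> eta u = tau u) ->
  0 < wcond AE AV e L sigma eta ->
  alpha * wcond AE AV e L sigma tau <= beta * wcond AE AV e L sigma eta.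
Proof.
move=> SL cS ext Heta.
have [HL HV HE] := (pos_iff AE0 AEs AV0 esym eirr L sigma eta).1 Heta.
have indE : [forall v in L, eta v == sigma v].
  by apply/forall_inP => u uL; apply/eqP; apply: HL.
have indT : [forall v in L, tau v == sigma v].
  apply/forall_inP => u uL; apply/eqP; rewrite -ext ?HL //.
  by apply/negP => /SL; rewrite uL.
move: Heta; rewrite !wcond_split // => Heta.
have [H' H3] := @mul_pos_split R _ _ (mulr_ge0 (P1_ge0 AV0 L eta) (P2_ge0 AE0 e L sigma eta)) (P3_ge0 AE0 e L eta) Heta.
have [H1 H2] := @mul_pos_split R _ _ (P1_ge0 AV0 L eta) (P2_ge0 AE0 e L sigma eta) H'.
have c1 : m ^+ Delta.+1 * P1 AV L tau <= M ^+ Delta.+1 * P1 AV L eta.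
  apply: (@prod_compare R V _ (fun u => u \in S)) => //.
  - by move=> x _ xS; rewrite ext.
  - move=> x _ _ gx; exact: HmV.
  - apply: leq_trans cS; apply: subset_leq_card; apply/subsetP => x.
    by rewrite inE => /andP[].
have c2 : m ^+ Delta ^+ Delta.+1 * P2 AE e L sigma tau <= M ^+ Delta ^+ Delta.+1 * P2 AE e L sigma eta.
  apply: (@prod_compare R V _ (fun u => u \in S)) => //.
  - exact: mD0.
  - exact: mD1.
  - exact: MD1.
  - by move=> x _; apply: prodr_ge0.
  - by move=> x _; apply: prodr_ge0.
  - by move=> x _ xS; rewrite ext.
  - move=> x _ _; apply: (inner_le M1).
      by move=> y _; rewrite AE0 HME.
    by apply: (nbr_card x) => y /andP[].
  - move=> x _ _; apply: (inner_ge m0 m1).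
      by move=> y _; split; [apply: AE0| apply: HmE].
    by apply: (nbr_card x) => y /andP[].
  - apply: leq_trans cS; apply: subset_leq_card; apply/subsetP => x.
    by rewrite inE => /andP[].
have c3 : m ^+ Delta ^+ (Delta.+1 * Delta.+1) * P3 AE e L tau <= M ^+ Delta ^+ (Delta.+1 * Delta.+1) * P3 AE e L eta.
  apply: (@prod_compare R V _ (fun u => (u \in S) || [exists s in S, e u s])) => //.
  - exact: mD0.
  - exact: mD1.
  - exact: MD1.
  - by move=> x _; apply: prodr_ge0.
  - by move=> x _; apply: prodr_ge0.
  - move=> x _; rewrite negb_or => /andP[xS /exists_inP nS].
    rewrite ext //; apply: eq_bigr => y /and3P[_ exy _].
    rewrite ext //; apply/negP => yS; apply: nS; by exists y.
  - move=> x _ _; apply: (inner_le M1).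
      by move=> y _; rewrite AE0 HME.
    by apply: (nbr_card x) => y /and3P[].
  - move=> x _ _; apply: (inner_ge m0 m1).
      by move=> y _; split; [apply: AE0| apply: HmE].
    by apply: (nbr_card x) => y /and3P[].
  - apply: (leq_trans (n := #|S :|: \bigcup_(s in S) [set u | e s u]|)).
      apply: subset_leq_card; apply/subsetP => x.
      rewrite inE => /andP[_ /orP[xS|/exists_inP[s sS esx]]].
        by rewrite in_setU xS.
      rewrite in_setU; apply/orP; right; apply/bigcupP; exists s => //.
      by rewrite inE esym.
    have := (leq_card_setU S (\bigcup_(s in S) [set u | e s u])).1; move=> hU; apply: leq_trans hU _.
    apply: (leq_trans (n := #|S| + \sum_(s in S) Delta)%N).
      rewrite leq_add2l; apply: leq_trans (card_bigcup_le _ _ _ _) _.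
      by apply: leq_sum => s _; apply: edeg.
    rewrite sum_nat_const; nia.
have e1 := mulr_ge0 (exprn_ge0 _ (ltW m0)) (P1_ge0 AV0 L tau).
have e2 := mulr_ge0 (exprn_ge0 _ (ltW mD0)) (P2_ge0 AE0 e L sigma tau).
have e3 := mulr_ge0 (exprn_ge0 _ (ltW mD0)) (P3_ge0 AE0 e L tau).
have -> : alpha * (P1 AV L tau * P2 AE e L sigma tau * P3 AE e L tau) =
  (m ^+ Delta.+1 * P1 AV L tau) * (m ^+ Delta ^+ Delta.+1 * P2 AE e L sigma tau) *
  (m ^+ Delta ^+ (Delta.+1 * Delta.+1) * P3 AE e L tau) by rewrite /alpha; ring.
have -> : beta * (P1 AV L eta * P2 AE e L sigma eta * P3 AE e L eta) =
  (M ^+ Delta.+1 * P1 AV L eta) * (M ^+ Delta ^+ Delta.+1 * P2 AE e L sigma eta) *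
  (M ^+ Delta ^+ (Delta.+1 * Delta.+1) * P3 AE e L eta) by rewrite /beta; ring.
apply: ler_pM => //; first exact: mulr_ge0.
exact: ler_pM.
Qed.


Lemma beta_ge0 : 0 <= beta.
Proof. by rewrite /beta !mulr_ge0 // !exprn_ge0 // (le_trans ler01). Qed.
Lemma beta_gt0 : 0 < beta.
Proof. by rewrite /beta !mulr_gt0 // !exprn_gt0 // (lt_le_trans ltr01). Qed.

Lemma sum_pos_exists (X : finType) (P : pred X) (F : X -> R) :
  (forall x, 0 <= F x) -> 0 < \sum_(x | P x) F x -> exists x, P x && (0 < F x).
Proof.
move=> F0 Hs; case: (boolP [exists x, P x && (0 < F x)]) => [/existsP//|/existsPn H].
move: Hs; rewrite big1 ?ltxx // => x Px.
have := H x; rewrite Px /= -leNgt => Fx; apply: le_anti; by rewrite Fx F0.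
Qed.

Definition Sset (L : {set V}) (v : V) := v |: [set u | e v u && (u \notin L)].

Lemma Sset_card L v : (#|Sset L v| <= Delta.+1)%N.
Proof.
rewrite /Sset cardsU1 -add1n; apply: leq_add; first by case: (_ \notin _).
apply: leq_trans (edeg v); apply: subset_leq_card; apply/subsetP => x.
by rewrite !inE => /andP[].
Qed.

Lemma exists_good (perm : permissive AE AV e) (L : {set V}) (sigma : V -> 'I_q)
  (v : V) (c : 'I_q) (vL : v \notin L) (Hc : 0 < marginal AE AV e L sigma v c)
  (tau : {ffun V -> 'I_q}) :
  exists eta : {ffun V -> 'I_q}, [&& eta v == c,
    [forall u, (u \notin Sset L v) ==> (eta u == tau u)] &
    alpha * wcond AE AV e L sigma tau <= beta * wcond AE AV e L sigma eta].
Proof.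
have wge := wcond_ge0 AE0 AV0 e.
have [rho /andP[/eqP rhov rhop]] : exists rho : {ffun V -> 'I_q},
    (rho v == c) && (0 < wcond AE AV e L sigma rho).
  apply: sum_pos_exists => //.
  move: Hc; rewrite /marginal.
  have Zp := perm L sigma.
  move=> Hc; have -> : \sum_(tau0 : {ffun V -> 'I_q} | tau0 v == c) wcond AE AV e L sigma tau0 =
     marginal AE AV e L sigma v c * Zcond AE AV e L sigma.
    by rewrite /marginal divfK // gt_eqF.
  by apply: mulr_gt0.
have [rL rV rE] := (pos_iff AE0 AEs AV0 esym eirr L sigma rho).1 rhop.
case: (boolP (0 < wcond AE AV e L sigma tau)) => tpos; last first.
  exists [ffun u => if u == v then c else tau u]; apply/and3P; split.
  - by rewrite ffunE eqxx.
  - apply/forallP => u; apply/implyP; rewrite !inE negb_or => /andP[uv _].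
    by rewrite ffunE (negbTE uv).
  - have -> : wcond AE AV e L sigma tau = 0.
      by apply: le_anti; rewrite wge andbT leNgt.
    by rewrite mulr0 mulr_ge0 // beta_ge0.
have [tL tV tE] := (pos_iff AE0 AEs AV0 esym eirr L sigma tau).1 tpos.
set N := [set u | e v u && (u \notin L)].
set sig2 := fun u => if u == v then c else tau u.
have [eta /andP[_ etap]] := @sum_pos_exists _ (fun _ => true) _ (fun x : {ffun V -> 'I_q} => wge (~: N) sig2 x) (perm (~: N) sig2).
have [eL eV eE] := (pos_iff AE0 AEs AV0 esym eirr (~: N) sig2 eta).1 etap.
have eoff : forall u, u \notin N -> eta u = sig2 u.
  by move=> u uN; apply: eL; rewrite inE.
have vN : v \notin N by rewrite inE eirr.
have etav : eta v = c by rewrite eoff // /sig2 eqxx.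
have etaoff : forall u, u \notin Sset L v -> eta u = tau u.
  move=> u; rewrite /Sset !inE negb_or => /andP[uv uN].
  by rewrite eoff ?inE // /sig2 (negbTE uv).
exists eta; apply/and3P; split.
- by rewrite etav.
- by apply/forallP => u; apply/implyP => uS; rewrite etaoff.
have HS : forall u, u \in Sset L v -> u \notin L.
  move=> u; rewrite /Sset !inE => /orP[/eqP->//|/andP[]//].
apply: compare => //; first exact: HS.
- exact: Sset_card.
- exact: etaoff.
have notS : forall u, u != v -> u \notin N -> u \notin Sset L v.
  by move=> u uv uN; rewrite /Sset in_setU1 negb_or uv /=; exact: uN.
have uLS : forall u, u \in L -> u \notin Sset L v.
  move=> u uL; rewrite /Sset !inE negb_or uL andbF andbT.
  by apply/eqP => uv; rewrite -uv uL in vL.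
apply: (pos_iff AE0 AEs AV0 esym eirr L sigma eta).2; split.
- by move=> u uL; rewrite etaoff ?uLS // tL.
- move=> u uL; case uN: (u \in N).
    by apply: eV; rewrite inE uN.
  case uv: (u == v).
    by rewrite (eqP uv) etav -rhov; apply: rV.
  rewrite etaoff; first exact: tV.
  by apply: notS; rewrite ?uv ?uN.
- move=> u x uL eux.
  case uN: (u \in N).
    by apply: eE => //; rewrite inE uN.
  case xN: (x \in N).
    by rewrite AEs; apply: eE; [rewrite inE xN| rewrite esym].
  case uv: (u == v).
    move/eqP: uv => uv; subst u.
    have xL : x \in L by move: xN; rewrite inE eux /= => /negbFE.
    have xv : x != v by apply/eqP => xv; rewrite xv eirr in eux.
    rewrite etav eoff ?xN // /sig2 (negbTE xv) tL // -rL // -rhov.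
    exact: rE.
  case xv: (x == v).
    move/eqP: xv => xv; subst x.
    by move: uN; rewrite inE esym eux uL.
  rewrite !etaoff; first exact: tE.
    by apply: notS; rewrite ?xv ?xN.
  by apply: notS; rewrite ?uv ?uN.
Qed.

Lemma card_agree (S : {set V}) (eta : {ffun V -> 'I_q}) (c : 'I_q) :
  (#|S| <= Delta.+1)%N ->
  (#|[set tau : {ffun V -> 'I_q} | [forall u, (u \notin S) ==> (tau u == eta u)]]|
     <= q.+1 ^ Delta.+1)%N.
Proof.
move=> cS.
set Q := [set tau : {ffun V -> 'I_q} | _].
pose h := fun tau : {ffun V -> 'I_q} => [ffun u => if u \in S then tau u else c].
rewrite -(@card_in_imset _ _ h Q); last first.
  move=> t1 t2; rewrite !inE => /forallP H1 /forallP H2 E; apply/ffunP => u.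
  case uS: (u \in S).
    by have := congr1 (fun f : {ffun V -> 'I_q} => f u) E; rewrite !ffunE uS.
  by move: (H1 u) (H2 u); rewrite uS /= => /eqP-> /eqP->.
apply: (leq_trans (n := #|pffun_on c S [set: 'I_q]|)).
  apply: subset_leq_card; apply/subsetP => f /imsetP[tau _ ->].
  apply/pffun_onP; split.
    by apply/subsetP => u; rewrite inE ffunE; case: ifP => //; rewrite eqxx.
  by move=> y _; rewrite inE.
rewrite card_pffun_on cardsT card_ord.
apply: (leq_trans (n := q.+1 ^ #|S|)); last by apply: leq_pexp2l.
case: #|S| => [//|k]; by rewrite leq_exp2r.
Qed.

Lemma marg_bound (perm : permissive AE AV e) (L : {set V}) (sigma : V -> 'I_q)
  (v : V) (c : 'I_q) (vL : v \notin L) (Hc : 0 < marginal AE AV e L sigma v c) :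
  alpha / (beta * (q.+1 ^ Delta.+1)%:R) <= marginal AE AV e L sigma v c.
Proof.
have G := exists_good perm L sigma v c vL Hc.
pose g := fun tau => xchoose (G tau).
have gP := fun tau => xchooseP (G tau).
set w := wcond AE AV e L sigma.
set Nn := (q.+1 ^ Delta.+1)%:R : R.
have wge : forall t : {ffun V -> 'I_q}, 0 <= w t by move=> t; apply: wcond_ge0.
have Zp := perm L sigma.
have Np : 0 < Nn by rewrite ltr0n expn_gt0.
set num := \sum_(tau : {ffun V -> 'I_q} | tau v == c) w tau.
have key : alpha * Zcond AE AV e L sigma <= num * (beta * Nn).
  rewrite /Zcond mulr_sumr.
  apply: (le_trans (y := \sum_(tau : {ffun V -> 'I_q}) beta * w (g tau))).
    by apply: ler_sum => tau _; case/and3P: (gP tau).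
  rewrite -mulr_sumr [num * _]mulrCA; apply: ler_wpM2l; first exact: ltW beta_gt0.
  rewrite (partition_big g (fun eta : {ffun V -> 'I_q} => eta v == c)); last first.
    by move=> tau _; case/and3P: (gP tau).
  rewrite /num mulr_suml; apply: ler_sum => eta _.
  apply: (le_trans (y := \sum_(tau in [set tau : {ffun V -> 'I_q} |
       [forall u, (u \notin Sset L v) ==> (tau u == eta u)]]) w eta)).
    rewrite big_mkcond [X in _ <= X]big_mkcond /=; apply: ler_sum => tau _.
    case: eqP => [gt|_]; last by case: ifP.
    have -> : tau \in [set tau : {ffun V -> 'I_q} |
       [forall u, (u \notin Sset L v) ==> (tau u == eta u)]].
      rewrite inE; apply/forallP => u; apply/implyP => uS.
      case/and3P: (gP tau) => _ /forallP H _.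
      move/implyP: (H u) => /(_ uS) /eqP <-; by rewrite -/(g tau) gt.
    by rewrite gt.
  rewrite sumr_const -mulr_natr; apply: ler_wpM2l => //.
  rewrite ler_nat; apply: (card_agree _ _ c) => //; exact: Sset_card.
rewrite ler_pdivlMr // mulrAC ler_pdivrMr //; last by rewrite mulr_gt0 // beta_gt0.
Qed.

End Local3.

Lemma exists_bounds (R : realType) (s : seq R) :
  exists m M : R, [/\ 0 < m, m <= 1, 1 <= M &
    forall x, x \in s -> x <= M /\ (0 < x -> m <= x)].
Proof.
elim: s => [|y s [m [M [m0 m1 M1 H]]]].
  by exists 1, 1; split => //.
exists (if (0 < y) && (y < m) then y else m), (M + `|y|); split.
- by case: ifP => // /andP[].
- case: ifP => // /andP[_ ym]; exact: le_trans (ltW ym) m1.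
- by apply: le_trans M1 _; rewrite lerDl normr_ge0.
move=> x; rewrite inE => /orP[/eqP->|xs].
  split; first by have := ler_norm y; have := le_trans ler01 M1; lra.
  move=> y0; case: ifP => // /negbT; rewrite negb_and y0 /= -leNgt //.
have [xM xm] := H x xs; split.
  by apply: le_trans xM _; rewrite lerDl normr_ge0.
move=> x0; apply: le_trans (xm x0); case: ifP => // /andP[_ ym]; exact: ltW.
Qed.

Theorem mainTheorem4 (R : realType) (q Delta : nat)
    (AE : 'I_q -> 'I_q -> R) (AV : 'I_q -> R) :
  (forall i j, 0 <= AE i j) -> (forall i j, AE i j = AE j i) ->
  (forall i, 0 <= AV i) ->
  exists b : R, 0 < b /\
    forall (V : finType) (e : rel V),
      symmetric e -> irreflexive e -> max_degree_le e Delta ->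
      permissive AE AV e -> marginally_bounded AE AV e b.
Proof.
move=> AE0 AEs AV0.
have [m [M [m0 m1 M1 H]]] := @exists_bounds R
  ([seq AE p.1 p.2 | p <- enum {: 'I_q * 'I_q}] ++ [seq AV i | i <- enum 'I_q]).
have HE : forall i j, AE i j <= M /\ (0 < AE i j -> m <= AE i j).
  move=> i j; apply: H; rewrite mem_cat; apply/orP; left.
  by apply/mapP; exists (i, j); rewrite ?mem_enum.
have HV : forall i, AV i <= M /\ (0 < AV i -> m <= AV i).
  move=> i; apply: H; rewrite mem_cat; apply/orP; right.
  by apply: map_f; rewrite mem_enum.
exists (@alpha R m Delta / (@beta R M Delta * (q.+1 ^ Delta.+1)%:R)); split.
  apply: divr_gt0; first exact: alpha_gt0.
  by apply: mulr_gt0; [exact: beta_gt0|rewrite ltr0n expn_gt0].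
move=> V e esym eirr edeg perm L sigma v c vL Hc.
apply: (@marg_bound R q AE AV AE0 AEs AV0 m M Delta m0 m1 M1 _ _ _ _ V e esym eirr edeg perm L sigma v c vL Hc).
- by move=> i j; case: (HE i j).
- by move=> i; case: (HV i).
- by move=> i j; case: (HE i j).
- by move=> i; case: (HV i).
Qed.
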